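(* Let $\mathcal B$ be a unital $*$-algebra, $\phi:\mathcal B\to\mathbb C$ a positive faithful star-linear functional and $\gamma:\mathcal B\to\mathcal B$ a star-linear map such that $\gamma+\phi$ is completely positive. If for some $t<1$ the map $\gamma+t\phi$ is still completely positive, then the sesquilinear form $\langle\cdot,\cdot\rangle_{\gamma,\phi}$ on the algebraic Fock space $\mathcal F_{alg}(\mathcal B)$ is non-degenerate, i.e. $\langle\xi,\xi\rangle_{\gamma,\phi}=0$ implies $\xi=0$.
   Context: For a star-linear $\psi:\mathcal B\to\mathbb C$ and scalar $s$, $(\gamma+s\psi)[b]:=\gamma[b]+s\psi[b]1_{\mathcal B}$. A map $T:\mathcal B\to\mathcal B$ is completely positive if for every $n$ the entrywise map $M_n(\mathcal B)\to M_n(\mathcal B)$ sends positive elements (finite sums $\sum u_i^*u_i$) to positive elements. $\phi$ is faithful if $\phi[u^*u]=0$ only for $u=0$. The algebraic Fock space is $\mathcal F_{alg}(\mathcal B)=\mathbb C\Omega\oplus\bigoplus_{n\ge1}\mathcal B^{\otimes n}$ (algebraic tensor powers), with the sesquilinear form determined by $\langle\Omega,\Omega\rangle_{\gamma,\phi}=1$, $\Omega$ orthogonal to all tensors, and $\langle u_1\otimes\cdots\otimes u_n, v_1\otimes\cdots\otimes v_k\rangle_{\gamma,\phi}=\delta_{n=k}\,\phi\big[v_n^*(\gamma+\phi)[v_{n-1}^*(\gamma+\phi)[\cdots(\gamma+\phi)[v_1^*u_1]\cdots]u_{n-1}]u_n\big]$, extended linearly in the first and antilinearly in the second argument. *)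

(* Defs.v *)
From HB Require Import structures.
From mathcomp Require Import all_boot all_order all_algebra.
From mathcomp Require Import complex.
From mathcomp Require Import reals.

Set Implicit Arguments.
Unset Strict Implicit.
Unset Printing Implicit Defensive.

Import Order.TTheory GRing.Theory Num.Theory.
Local Open Scope ring_scope.

Section Defs.
Variables (C : numClosedFieldType) (B : algType C).

Definition star_involution (star : B -> B) : Prop :=
  [/\ involutive star,
      forall x y, star (x + y) = star x + star y,
      forall (a : C) x, star (a *: x) = a^* *: star x &
      forall x y, star (x * y) = star y * star x].

Definition star_linear_functional (star : B -> B) (psi : B -> C) : Prop :=
  (forall (a : C) x y, psi (a *: x + y) = a * psi x + psi y) /\
  (forall x, psi (star x) = (psi x)^*).

Definition star_linear_map (star : B -> B) (T : B -> B) : Prop :=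
  (forall (a : C) x y, T (a *: x + y) = a *: T x + T y) /\
  (forall x, T (star x) = star (T x)).

Definition positive_functional (star : B -> B) (phi : B -> C) : Prop :=
  forall u, 0 <= phi (star u * u).

Definition faithful_functional (star : B -> B) (phi : B -> C) : Prop :=
  forall u, phi (star u * u) = 0 -> u = 0.

(* (gamma + s psi)[b] := gamma[b] + s psi[b] 1_B *)
Definition shift (gamma : B -> B) (psi : B -> C) (s : C) : B -> B :=
  fun b => gamma b + (s * psi b) *: 1.

Definition mxstar (star : B -> B) n (U : 'M[B]_n) : 'M[B]_n :=
  \matrix_(i, j) star (U j i).

Definition mx_positive (star : B -> B) n (X : 'M[B]_n) : Prop :=
  exists s : seq 'M[B]_n, X = \sum_(U <- s) (mxstar star U *m U).

Definition completely_positive (star : B -> B) (T : B -> B) : Prop :=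
  forall n (X : 'M[B]_n), mx_positive star X -> mx_positive star (map_mx T X).

(* A word [:: u_1; ...; u_n] stands for u_1 (x) ... (x) u_n; the empty word
   stands for Omega.  An element of F_alg(B) is represented by a formal
   finite linear combination of words. *)
Definition fock := seq (C * seq B).

Fixpoint word_aux (star : B -> B) (T : B -> B) (a : B) (u v : seq B) : B :=
  match u, v with
  | x :: u', y :: v' => word_aux star T (star y * T a * x) u' v'
  | _, _ => a
  end.

Definition word_form (star : B -> B) (gamma : B -> B) (phi : B -> C)
    (u v : seq B) : C :=
  if size u != size v then 0 else
  match u, v with
  | x :: u', y :: v' =>
      phi (word_aux star (shift gamma phi 1) (star y * x) u' v')
  | _, _ => 1
  end.

Definition fock_form (star : B -> B) (gamma : B -> B) (phi : B -> C)
    (xi eta : fock) : C :=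
  \sum_(p <- xi) \sum_(q <- eta) p.1 * (q.1)^* * word_form star gamma phi p.2 q.2.

Definition fcoef (xi : fock) (w : seq B) : C :=
  \sum_(p <- xi | p.2 == w) p.1.

(* multilinearity relation vectors  (p, s, c, x, y) :
   [p ++ (c x + y) :: s] - c [p ++ x :: s] - [p ++ y :: s] *)
Definition mlrel := (seq B * seq B * C * B * B)%type.

Definition relvec (r : mlrel) (w : seq B) : C :=
  let: (p, s, c, x, y) := r in
  (w == p ++ (c *: x + y) :: s)%:R - c * (w == p ++ x :: s)%:R
  - (w == p ++ y :: s)%:R.

(* xi represents 0 in F_alg(B) = C Omega (+) (+)_n B^{(x)n}: its coefficient
   function lies in the span of the multilinearity relations *)
Definition fock_zero (xi : fock) : Prop :=
  exists rs : seq (C * mlrel),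
    forall w, fcoef xi w = \sum_(r <- rs) r.1 * relvec r.2 w.

End Defs.

(* Main.v *)
Require Import Defs.
From HB Require Import structures.
From mathcomp Require Import all_boot all_order all_algebra.
From mathcomp Require Import complex.
From mathcomp Require Import reals.
From mathcomp Require Import ring.
Import Order.TTheory GRing.Theory Num.Theory.
Local Open Scope ring_scope.

Set Implicit Arguments.
Unset Strict Implicit.
Unset Printing Implicit Defensive.

Section Main.
Variables (R : realType) (B : algType R[i]) (star : B -> B)
    (phi : B -> R[i]) (gamma : B -> B).
Hypotheses (Hs : star_involution star)
  (Hphi : star_linear_functional star phi)
  (Hpos : positive_functional star phi)
  (Hfa : faithful_functional star phi)
  (Hg : star_linear_map star gamma).

Local Notation C := R[i].

Lemma starK x : star (star x) = x.
Proof. by case: Hs => h _ _ _; apply: h. Qed.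
Lemma starD x y : star (x + y) = star x + star y.
Proof. by case: Hs. Qed.
Lemma starZ (a : C) x : star (a *: x) = a^* *: star x.
Proof. by case: Hs. Qed.
Lemma starM x y : star (x * y) = star y * star x.
Proof. by case: Hs. Qed.
Lemma star0 : star 0 = 0.
Proof. by apply: (addrI (star 0)); rewrite -starD !addr0. Qed.
Lemma star_sum (I : Type) (s : seq I) (F : I -> B) :
  star (\sum_(i <- s) F i) = \sum_(i <- s) star (F i).
Proof. by apply: (big_morph star starD star0). Qed.

Lemma phiD x y : phi (x + y) = phi x + phi y.
Proof. by case: Hphi => h _; rewrite -{1}[x]scale1r h mul1r. Qed.
Lemma phi0 : phi 0 = 0.
Proof.
case: Hphi => h _; apply: (addrI (phi 0)).
by have := h 1 0 0; rewrite scale1r addr0 mul1r => e; rewrite -e addr0.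
Qed.
Lemma phiZ (a : C) x : phi (a *: x) = a * phi x.
Proof. by case: Hphi => h _; rewrite -[a *: x]addr0 h phi0 addr0. Qed.
Lemma phi_sum (I : Type) (s : seq I) (F : I -> B) :
  phi (\sum_(i <- s) F i) = \sum_(i <- s) phi (F i).
Proof. by apply: (big_morph phi phiD phi0). Qed.
Lemma phi_star x : phi (star x) = (phi x)^*.
Proof. by case: Hphi. Qed.

Definition T := shift gamma phi 1.

Lemma gammaD x y : gamma (x + y) = gamma x + gamma y.
Proof. by case: Hg => h _; rewrite -{1}[x]scale1r h scale1r. Qed.
Lemma gammaZ (a : C) x : gamma (a *: x) = a *: gamma x.
Proof.
case: Hg => h _; have g0 : gamma 0 = 0.
  by apply: (addrI (gamma 0)); have := h 1 0 0; rewrite scale1r addr0 scale1r => e; rewrite -e addr0.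
by rewrite -[a *: x]addr0 h g0 addr0.
Qed.

Lemma shiftD s x y : shift gamma phi s (x + y) = shift gamma phi s x + shift gamma phi s y.
Proof. by rewrite /shift gammaD phiD mulrDr scalerDl addrACA. Qed.
Lemma shiftZ s (a : C) x : shift gamma phi s (a *: x) = a *: shift gamma phi s x.
Proof. by rewrite /shift gammaZ phiZ scalerDr scalerA mulrCA. Qed.
Lemma shift0 s : shift gamma phi s 0 = 0.
Proof. by rewrite -{1}(scale0r (0 : B)) shiftZ scale0r. Qed.
Lemma shift_sum s (I : Type) (r : seq I) (F : I -> B) :
  shift gamma phi s (\sum_(i <- r) F i) = \sum_(i <- r) shift gamma phi s (F i).
Proof. by apply: (big_morph _ (shiftD s) (shift0 s)). Qed.

Lemma T_split t x : T x = shift gamma phi t x + ((1 - t) * phi x) *: 1.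
Proof. by rewrite /T /shift -addrA -scalerDl -mulrDl [t + _]addrC subrK. Qed.


Lemma phiN x : phi (- x) = - phi x.
Proof. by rewrite -scaleN1r phiZ mulN1r. Qed.

Definition ip x y := phi (star y * x).

Lemma ipDl x y z : ip (x + y) z = ip x z + ip y z.
Proof. by rewrite /ip mulrDr phiD. Qed.
Lemma ipZl (a : C) x z : ip (a *: x) z = a * ip x z.
Proof. by rewrite /ip -scalerAr phiZ. Qed.
Lemma ipNl x z : ip (- x) z = - ip x z.
Proof. by rewrite /ip mulrN phiN. Qed.
Lemma ipBl x y z : ip (x - y) z = ip x z - ip y z.
Proof. by rewrite ipDl ipNl. Qed.
Lemma ip0l z : ip 0 z = 0.
Proof. by rewrite /ip mulr0 phi0. Qed.
Lemma ip_suml (I : Type) (s : seq I) (F : I -> B) z :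
  ip (\sum_(i <- s) F i) z = \sum_(i <- s) ip (F i) z.
Proof. by apply: (big_morph (ip^~ z) (fun x y => ipDl x y z) (ip0l z)). Qed.
Lemma ipC x y : ip y x = (ip x y)^*.
Proof. by rewrite /ip -phi_star starM starK. Qed.
Lemma ip_ge0 x : 0 <= ip x x.
Proof. exact: Hpos. Qed.
Lemma ip_eq0 x : ip x x = 0 -> x = 0.
Proof. exact: Hfa. Qed.

Definition coef e x := ip x e / ip e e.

Definition orthE (E : seq B) :=
  [/\ uniq E, forall e, e \in E -> ip e e != 0 &
      forall e e', e \in E -> e' \in E -> e != e' -> ip e e' = 0].

Definition spanned (E : seq B) x := x = \sum_(e <- E) coef e x *: e.

Lemma sum_orth E (F : B -> C) y : orthE E -> y \in E ->
  \sum_(e <- E) F e * ip e y = F y * ip y y.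
Proof.
case=> uE nz o yE; rewrite (bigD1_seq y) //= big_seq_cond big1 ?addr0 //.
by move=> e /andP[eE ne]; rewrite o ?mulr0.
Qed.


Lemma gram (L : seq B) : exists E, orthE E /\ forall x, x \in L -> spanned E x.
Proof.
elim: L => [|x L [E [oE sp]]].
  by exists [::]; split.
set r := x - \sum_(e <- E) coef e x *: e.
have re : forall e, e \in E -> ip r e = 0.
  move=> e eE; rewrite /r ipBl ip_suml.
  under eq_bigr do rewrite ipZl.
  by rewrite (sum_orth (fun e => coef e x)) // /coef divfK ?subrr //; case: oE => _ nz _; exact: nz.
have er : forall e, e \in E -> ip e r = 0 by move=> e eE; rewrite ipC re // conjC0.
case: (eqVneq r 0) => [r0|rn0].
  exists E; split => // z; rewrite inE => /orP[/eqP->|zL]; last exact: sp.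
  by apply/eqP; rewrite -subr_eq0 -/r r0.
have rr : ip r r != 0 by apply: contra_neq rn0 => /ip_eq0.
have rE : r \notin E by apply/negP => /re /eqP; rewrite (negbTE rr).
case: oE => uE nz o.
exists (r :: E); split.
  split; first by rewrite /= rE.
    by move=> e; rewrite inE => /orP[/eqP->//|]; apply: nz.
  move=> e e'; rewrite !inE => /orP[/eqP->|eE] /orP[/eqP->|e'E] ne.
  - by rewrite eqxx in ne.
  - by rewrite re.
  - by rewrite er.
  - exact: o.
move=> z; rewrite inE => /orP[/eqP->|zL].
  have xr : x = r + \sum_(e <- E) coef e x *: e by rewrite /r subrK.
  rewrite /spanned big_cons.
  have -> : coef r x = 1.
    rewrite /coef {1}xr ipDl ip_suml big_seq big1 ?addr0 ?divff // => e eE.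
    by rewrite ipZl er ?mulr0.
  by rewrite scale1r -xr.
rewrite /spanned big_cons.
have -> : coef r z = 0.
  rewrite /coef {1}(sp z zL) ip_suml big_seq big1 ?mul0r // => e eE.
  by rewrite ipZl er ?mulr0.
by rewrite scale0r add0r -(sp z zL).
Qed.


Local Notation WA := (word_aux star T).

Lemma wa_lin u v (k : C) a b : WA (k *: a + b) u v = k *: WA a u v + WA b u v.
Proof.
elim: u v a b => [|x u IH] [|y v] a b //=.
by rewrite /T shiftD shiftZ mulrDr mulrDl -scalerAr -scalerAl IH.
Qed.

Lemma wa0 u v : WA 0 u v = 0.
Proof.
elim: u v => [|x u IH] [|y v] //=.
by rewrite /T shift0 mulr0 mul0r IH.
Qed.

Lemma wa_sumZ (I : Type) (s : seq I) (k : I -> C) (F : I -> B) u v :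
  WA (\sum_(i <- s) k i *: F i) u v = \sum_(i <- s) k i *: WA (F i) u v.
Proof.
elim: s => [|i s IH]; first by rewrite !big_nil wa0.
by rewrite !big_cons wa_lin IH.
Qed.

Lemma wa_rcons u v a x y : size u = size v ->
  WA a (rcons u x) (rcons v y) = star y * T (WA a u v) * x.
Proof.
elim: u v a => [|x' u IH] [|y' v] a //= [e].
by rewrite IH.
Qed.

Lemma span_wal E x b u v : spanned E x ->
  \sum_(e <- E) coef e x *: WA (b * e) u v = WA (b * x) u v.
Proof.
move=> sx; rewrite -wa_sumZ; congr WA.
by rewrite {2}sx mulr_sumr; apply: eq_bigr => e _; rewrite scalerAr.
Qed.

Lemma span_war E y b u v : spanned E y ->
  \sum_(e <- E) (coef e y)^* *: WA (star e * b) u v = WA (star y * b) u v.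
Proof.
move=> sy; rewrite -wa_sumZ; congr WA.
by rewrite {2}sy star_sum mulr_suml; apply: eq_bigr => e _; rewrite starZ scalerAl.
Qed.


Fixpoint expw (E : seq B) (u : seq B) : fock B :=
  match u with
  | [::] => [:: (1, [::])]
  | x :: u' => flatten [seq [seq (coef e x * q.1, e :: q.2) | q <- expw E u'] | e <- E]
  end.

Lemma sum_expw_cons (V : nmodType) E x u (F : C * seq B -> V) :
  \sum_(q <- expw E (x :: u)) F q =
  \sum_(e <- E) \sum_(q <- expw E u) F (coef e x * q.1, e :: q.2).
Proof. by rewrite /= big_flatten big_map; apply: eq_bigr => e _; rewrite big_map. Qed.

Lemma expw_prop E u q : q \in expw E u -> size q.2 = size u /\ all (mem E) q.2.
Proof.
elim: u q => [|x u IH] q /=; first by rewrite inE => /eqP->.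
case/flatten_mapP => e eE /mapP [q' q'in ->] /=.
by case: (IH q' q'in) => -> ->; rewrite eE.
Qed.

Lemma expw_size E u q : q \in expw E u -> size q.2 = size u.
Proof. by case/expw_prop. Qed.

Lemma aux_l E u v a : size u = size v -> (forall x, x \in u -> spanned E x) ->
  \sum_(q <- expw E u) q.1 *: WA a q.2 v = WA a u v.
Proof.
elim: u v a => [|x u IH] [|y v] a //=; first by rewrite big_seq1 scale1r.
move=> [e] sp.
rewrite big_flatten big_map /=.
rewrite -(span_wal _ _ _ (sp x (mem_head _ _))).
apply: eq_bigr => e0 _; rewrite big_map /=.
rewrite -(IH v) ?scaler_sumr //; last by move=> z zu; apply: sp; rewrite inE zu orbT.
by apply: eq_bigr => q _; rewrite scalerA.
Qed.

Lemma aux_r E u v a : size u = size v -> (forall x, x \in v -> spanned E x) ->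
  \sum_(q <- expw E v) (q.1)^* *: WA a u q.2 = WA a u v.
Proof.
elim: v u a => [|y v IH] [|x u] a //=; first by rewrite big_seq1 conjC1 scale1r.
move=> [e] sp.
rewrite big_flatten big_map /=.
rewrite -mulrA -(span_war _ _ _ (sp y (mem_head _ _))).
apply: eq_bigr => e0 _; rewrite big_map /=.
rewrite -(IH u) ?scaler_sumr //; last by move=> z zu; apply: sp; rewrite inE zu orbT.
by apply: eq_bigr => q _; rewrite scalerA rmorphM mulrA.
Qed.


Local Notation WF := (word_form star gamma phi).
Local Notation FF := (fock_form star gamma phi).

Lemma wf_cons x y u v : size u = size v ->
  WF (x :: u) (y :: v) = phi (WA (star y * x) u v).
Proof. by move=> e; rewrite /word_form /= eqSS e eqxx. Qed.

Lemma wf_size u v : size u != size v -> WF u v = 0.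
Proof. by rewrite /word_form => ->. Qed.

Lemma wf_expl E u v : (forall x, x \in u -> spanned E x) ->
  \sum_(q <- expw E u) q.1 * WF q.2 v = WF u v.
Proof.
move=> sp; have [e|ne] := eqVneq (size u) (size v); last first.
  rewrite wf_size // big_seq big1 // => q /expw_size sq.
  by rewrite wf_size ?mulr0 // sq.
case: u v e sp => [|x u] [|y v] //= e sp; first by rewrite big_seq1 mul1r.
case: e => e; rewrite big_flatten big_map /= wf_cons //.
rewrite -(span_wal _ _ _ (sp x (mem_head _ _))) phi_sum.
apply: eq_bigr => e0 _; rewrite big_map /= phiZ.
rewrite -(@aux_l E u v (star y * e0) e) ?phi_sum ?mulr_sumr; last first.
  by move=> z zu; apply: sp; rewrite inE zu orbT.
rewrite big_seq [RHS]big_seq; apply: eq_bigr => q /expw_size sq.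
by rewrite wf_cons ?sq // phiZ mulrA.
Qed.

Lemma wf_expr E u v : (forall x, x \in v -> spanned E x) ->
  \sum_(q <- expw E v) (q.1)^* * WF u q.2 = WF u v.
Proof.
move=> sp; have [e|ne] := eqVneq (size u) (size v); last first.
  rewrite wf_size // big_seq big1 // => q /expw_size sq.
  by rewrite wf_size ?mulr0 // sq.
case: u v e sp => [|x u] [|y v] //= e sp; first by rewrite big_seq1 conjC1 mul1r.
case: e => e; rewrite big_flatten big_map /= wf_cons //.
rewrite -(span_war _ _ _ (sp y (mem_head _ _))) phi_sum.
apply: eq_bigr => e0 _; rewrite big_map /= phiZ.
rewrite -(@aux_r E u v (star e0 * x) e) ?phi_sum ?mulr_sumr; last first.
  by move=> z zu; apply: sp; rewrite inE zu orbT.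
rewrite big_seq [RHS]big_seq; apply: eq_bigr => q /expw_size sq.
by rewrite wf_cons ?sq // phiZ rmorphM mulrA.
Qed.


Definition sclf (c : C) (s : fock B) : fock B := [seq (c * q.1, q.2) | q <- s].
Definition xexp E (xi : fock B) : fock B :=
  flatten [seq sclf p.1 (expw E p.2) | p <- xi].

Lemma FF_xexp E (xi : fock B) : (forall p, p \in xi -> forall x, x \in p.2 -> spanned E x) ->
  FF (xexp E xi) (xexp E xi) = FF xi xi.
Proof.
move=> sp; rewrite /fock_form {1}/xexp big_flatten big_map big_seq [RHS]big_seq.
apply: eq_bigr => p pin; rewrite big_map exchange_big /=.
transitivity (\sum_(q' <- xexp E xi) p.1 * q'.1^* * WF p.2 q'.2).
  apply: eq_bigr => q' _; rewrite -(wf_expl _ (sp p pin)) mulr_sumr.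
  by apply: eq_bigr => r _ /=; ring.
rewrite /xexp big_flatten big_map [LHS]big_seq [RHS]big_seq; apply: eq_bigr => q qin.
rewrite big_map /= -(wf_expr _ (sp q qin)) mulr_sumr.
by apply: eq_bigr => r _ /=; rewrite rmorphM; ring.
Qed.


Definition spanf (f : seq B -> C) :=
  exists rs : seq (C * mlrel B), forall w, f w = \sum_(r <- rs) r.1 * relvec r.2 w.

Lemma spanf_ext f g : (forall w, f w = g w) -> spanf f -> spanf g.
Proof. by move=> e [rs h]; exists rs => w; rewrite -e h. Qed.

Lemma spanf0 : spanf (fun _ => 0).
Proof. by exists [::] => w; rewrite big_nil. Qed.

Lemma spanfD f g : spanf f -> spanf g -> spanf (fun w => f w + g w).
Proof. by move=> [r1 h1] [r2 h2]; exists (r1 ++ r2) => w; rewrite big_cat h1 h2. Qed.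

Lemma spanfZ k f : spanf f -> spanf (fun w => k * f w).
Proof.
move=> [rs h]; exists [seq (k * r.1, r.2) | r <- rs] => w.
by rewrite big_map h mulr_sumr; apply: eq_bigr => r _ /=; rewrite mulrA.
Qed.

Lemma spanf_sum (I : Type) (s : seq I) (F : I -> seq B -> C) :
  (forall i, spanf (F i)) -> spanf (fun w => \sum_(i <- s) F i w).
Proof.
move=> h; elim: s => [|i s IH].
  by apply: spanf_ext spanf0 => w; rewrite big_nil.
by apply: spanf_ext (spanfD (h i) IH) => w; rewrite big_cons.
Qed.

Lemma spanf_rel r : spanf (relvec r).
Proof. by exists [:: (1, r)] => w; rewrite big_seq1 mul1r. Qed.

Definition pre (e : B) (f : seq B -> C) (w : seq B) : C :=
  match w with e' :: w' => (e' == e)%:R * f w' | [::] => 0 end.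

Definition shiftrel (e : B) (r : mlrel B) : mlrel B :=
  ((((e :: r.1.1.1.1, r.1.1.1.2), r.1.1.2), r.1.2), r.2).

Lemma relvec_shift e r w : relvec (shiftrel e r) w = pre e (relvec r) w.
Proof.
case: r => [[[[p s] c] x] y]; case: w => [|e' w] /=; first by rewrite !mulr0 !subr0.
rewrite !eqseq_cons; case: (e' == e); rewrite ?mul1r ?mul0r //.
by rewrite !mulr0 !subr0.
Qed.

Lemma spanf_pre e f : spanf f -> spanf (pre e f).
Proof.
move=> [rs h]; exists [seq (r.1, shiftrel e r.2) | r <- rs] => w.
rewrite big_map; under eq_bigr do rewrite relvec_shift.
case: w => [|e' w] /=; first by rewrite big1 // => r _; rewrite mulr0.
by rewrite h mulr_sumr; apply: eq_bigr => r _; rewrite mulrCA.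
Qed.

Lemma spanf_letter p s (E : seq B) (k : B -> C) :
  spanf (fun w => ((p ++ (\sum_(e <- E) k e *: e) :: s) == w)%:R
                  - \sum_(e <- E) k e * ((p ++ e :: s) == w)%:R).
Proof.
elim: E => [|e E IH].
  apply: spanf_ext (spanfZ (-1) (spanf_rel ((((p, s), 1), 0), 0))) => w /=.
  rewrite big_nil big_nil scale1r addr0 subr0 mul1r eq_sym.
  by ring.
apply: spanf_ext (spanfD (spanf_rel ((((p, s), k e), e), \sum_(e0 <- E) k e0 *: e0)) IH) => w /=.
rewrite !big_cons !(eq_sym w).
set A := ((p ++ _ :: s) == w)%:R; set B1 := ((p ++ (\sum_(e0 <- E) _) :: s) == w)%:R.
by rewrite /A /B1; ring.
Qed.


Lemma fcoef_expw_cons E x u w :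
  fcoef (expw E (x :: u)) w = \sum_(e <- E) coef e x * pre e (fcoef (expw E u)) w.
Proof.
rewrite /fcoef /= big_flatten big_map; apply: eq_bigr => e _.
rewrite big_map /=; case: w => [|e' w] /=.
  by rewrite big_pred0 ?mulr0.
rewrite (eq_bigl (fun j => (e == e') && (j.2 == w))); last by move=> j; rewrite eqseq_cons.
rewrite [e' == e]eq_sym; case: (e == e') => /=.
  by rewrite mul1r mulr_sumr.
by rewrite big_pred0_eq ?mul0r ?mulr0.
Qed.

Lemma pre_eq e u w : pre e (fun w' => (u == w')%:R) w = ((e :: u) == w)%:R.
Proof.
case: w => [|e' w] //=; rewrite eqseq_cons eq_sym.
by case: (e == e'); case: (u == w); rewrite ?mul1r ?mul0r.
Qed.

Lemma preB e g h w : pre e (fun w' => g w' - h w') w = pre e g w - pre e h w.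
Proof. by case: w => [|e' w] /=; rewrite ?subr0 // mulrBr. Qed.

Lemma expw_span E (u : seq B) : (forall x, x \in u -> spanned E x) ->
  spanf (fun w => (u == w)%:R - fcoef (expw E u) w).
Proof.
elim: u => [|x u IH] sp.
  apply: spanf_ext spanf0 => w; rewrite /fcoef /= big_cons big_nil.
  by case: ([::] == w); rewrite ?addr0 subrr.
have IH' := IH (fun z zu => sp z (@mem_behead _ (x :: u) z zu)).
apply: spanf_ext (spanfD (spanf_letter [::] u E (coef^~ x))
   (spanf_sum E (fun e => spanfZ (coef e x) (spanf_pre e IH')))) => w /=.
rewrite -(sp x (mem_head _ _)) fcoef_expw_cons.
set h := fcoef (expw E u).
have -> : \sum_(i <- E) coef i x * pre i (fun w0 => (u == w0)%:R - h w0) w =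
   \sum_(e <- E) coef e x * (e :: u == w)%:R - \sum_(e <- E) coef e x * pre e h w.
  by rewrite -sumrB; apply: eq_bigr => e _; rewrite preB pre_eq mulrBr.
ring.
Qed.


Lemma spanf_sum_in (I : eqType) (s : seq I) (F : I -> seq B -> C) :
  (forall i, i \in s -> spanf (F i)) -> spanf (fun w => \sum_(i <- s) F i w).
Proof.
elim: s => [|i s IH] h.
  by apply: spanf_ext spanf0 => w; rewrite big_nil.
apply: spanf_ext (spanfD (h i (mem_head _ _)) (IH (fun j js => h j _))) => [w|].
  by rewrite big_cons.
by move=> j js; rewrite inE js orbT.
Qed.

Lemma xexp_span E (xi : fock B) :
  (forall p, p \in xi -> forall x, x \in p.2 -> spanned E x) ->
  spanf (fun w => fcoef xi w - fcoef (xexp E xi) w).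
Proof.
move=> sp.
apply: spanf_ext (spanf_sum_in (fun p pin => spanfZ p.1 (expw_span (sp p pin)))) => w.
rewrite /fcoef /xexp big_flatten big_map [X in _ = X - _]big_mkcond -sumrB; apply: eq_bigr => p _.
rewrite big_map /= -mulr_sumr mulrBr; congr (_ - _).
by case: (p.2 == w); rewrite ?mulr1 ?mulr0.
Qed.

Lemma fock_zero_of E (xi : fock B) :
  (forall p, p \in xi -> forall x, x \in p.2 -> spanned E x) ->
  (forall w, fcoef (xexp E xi) w = 0) -> fock_zero xi.
Proof.
move=> sp z; have := xexp_span sp; apply: spanf_ext => w.
by rewrite z subr0.
Qed.


Lemma mxstar_mulE m (U V : 'M[B]_m) j i :
  (mxstar star U *m V) j i = \sum_k star (U k j) * V k i.
Proof. by rewrite mxE; apply: eq_bigr => k _; rewrite mxE. Qed.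

Lemma pos_scale m (M : 'M[B]_m) (x : 'I_m -> B) : mx_positive star M ->
  mx_positive star (\matrix_(j, i) (star (x j) * M j i * x i)).
Proof.
move=> [s ->]; exists [seq (\matrix_(k, i) (U k i * x i) : 'M[B]_m) | U : 'M[B]_m <- s].
apply/matrixP => j i; rewrite !mxE big_map !summxE mulr_sumr mulr_suml.
apply: eq_bigr => U _; rewrite !mxstar_mulE mulr_sumr mulr_suml.
by apply: eq_bigr => k _; rewrite !mxE starM !mulrA.
Qed.

Lemma pos_base m (x : 'I_m -> B) :
  mx_positive star (\matrix_(j, i) (star (x j) * x i)).
Proof.
case: m x => [|m] x.
  by exists [::]; apply/matrixP => [[]].
exists [:: \matrix_(k, i) (if k == ord0 then x i else 0)].
apply/matrixP => j i; rewrite big_seq1 mxstar_mulE big_ord_recl !mxE /= big1 ?addr0 //.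
by move=> k _; rewrite !mxE /= star0 mul0r.
Qed.

Lemma quad_ge0 m (P : 'M[B]_m) (c : 'I_m -> C) : mx_positive star P ->
  0 <= \sum_i \sum_j c i * (c j)^* * phi (P j i).
Proof.
move=> [s ->].
have -> : \sum_i \sum_j c i * (c j)^* * phi ((\sum_(U <- s) mxstar star U *m U) j i)
   = \sum_(U <- s) \sum_k phi (star (\sum_j c j *: U k j) * (\sum_i c i *: U k i)).
  transitivity (\sum_(U <- s) \sum_k \sum_i \sum_j
                  c i * (c j)^* * phi (star (U k j) * U k i)).
    transitivity (\sum_i \sum_j \sum_(U <- s) \sum_k
                  c i * (c j)^* * phi (star (U k j) * U k i)).
      apply: eq_bigr => i _; apply: eq_bigr => j _.
      rewrite summxE phi_sum mulr_sumr; apply: eq_bigr => U _.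
      by rewrite mxstar_mulE phi_sum mulr_sumr.
    under eq_bigr do rewrite exchange_big.
    rewrite exchange_big; apply: eq_bigr => U _.
    under eq_bigr do rewrite exchange_big.
    by rewrite exchange_big.
  apply: eq_bigr => U _; apply: eq_bigr => k _.
  rewrite exchange_big /= star_sum mulr_suml phi_sum; apply: eq_bigr => j _.
  rewrite mulr_sumr phi_sum; apply: eq_bigr => i _.
  rewrite starZ -[in RHS]scalerAr -[in RHS]scalerAl !phiZ; ring.
by apply: sumr_ge0 => U _; apply: sumr_ge0 => k _; apply: Hpos.
Qed.


Definition K (u v : seq B) := WA (star (head 0 v) * head 0 u) (behead u) (behead v).

Lemma wfK u v : size u = size v -> (0 < size u)%N -> WF u v = phi (K u v).
Proof. by case: u v => [|x u] [|y v] //= [e] _; rewrite wf_cons. Qed.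

Lemma K1 u v : size u = 1%N -> size v = 1%N -> K u v = star (head 0 v) * head 0 u.
Proof. by case: u v => [|x [|? ?]] [|y [|? ?]]. Qed.

Lemma K_rcons u v x y : size u = size v -> (0 < size u)%N ->
  K (rcons u x) (rcons v y) = star y * T (K u v) * x.
Proof. by case: u v => [|x' u] [|y' v] //= [e] _; rewrite /K /= wa_rcons. Qed.

Definition bl (s : seq B) := belast (head 0 s) (behead s).
Definition lt (s : seq B) := last (head 0 s) (behead s).

Lemma bl_lt s : (0 < size s)%N -> s = rcons (bl s) (lt s).
Proof. by case: s => [|a s] //= _; rewrite /bl /lt /= -lastI. Qed.

Lemma size_bl s : size (bl s) = (size s).-1.
Proof. by case: s => [|a s] //=; rewrite size_belast. Qed.

Lemma gram_pos (HT : completely_positive star T) n m (w : 'I_m -> seq B) :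
  (forall i, size (w i) = n.+1) ->
  mx_positive star (\matrix_(j, i) K (w i) (w j)).
Proof.
elim: n m w => [|n IH] m w sw.
  have -> : \matrix_(j, i) K (w i) (w j) = \matrix_(j, i) (star (head 0 (w j)) * head 0 (w i)).
    by apply/matrixP => j i; rewrite !mxE K1.
  exact: pos_base.
have sb : forall i, size (bl (w i)) = n.+1 by move=> i; rewrite size_bl sw.
have -> : \matrix_(j, i) K (w i) (w j) = \matrix_(j, i)
     (star (lt (w j)) * (map_mx T (\matrix_(j, i) K (bl (w i)) (bl (w j)))) j i * lt (w i)).
  apply/matrixP => j i; rewrite !mxE {1}(@bl_lt (w i)) ?sw // {1}(@bl_lt (w j)) ?sw //.
  by rewrite K_rcons ?sb.
by apply: pos_scale; apply: HT; apply: IH.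
Qed.


Lemma ip_E E x y : orthE E -> x \in E -> y \in E -> ip x y = (x == y)%:R * ip y y.
Proof.
case=> _ _ o xE yE; case: (eqVneq x y) => [->|ne]; first by rewrite mul1r.
by rewrite mul0r o.
Qed.

Lemma ip_E_sum E x x' : orthE E -> x \in E -> x' \in E ->
  ip x x' = \sum_(y <- E) (x == y)%:R * (x' == y)%:R * ip y y.
Proof.
move=> oE xE x'E; have uE : uniq E by case: oE.
rewrite (bigD1_seq x) //= eqxx mul1r big1 ?addr0.
  by rewrite (ip_E oE) // eq_sym; case: eqP => [->|]; rewrite ?mul0r.
by move=> y; rewrite eq_sym => /negbTE ->; rewrite !mul0r.
Qed.

Lemma ip_sumr (I : Type) (s : seq I) (k : I -> C) (F : I -> B) x :
  ip x (\sum_(i <- s) k i *: F i) = \sum_(i <- s) (k i)^* * ip x (F i).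
Proof.
rewrite ipC ip_suml rmorph_sum; apply: eq_bigr => i _.
by rewrite ipZl rmorphM [ip x _]ipC.
Qed.

Lemma sum_pred_nat m (P : pred 'I_m) (c : 'I_m -> C) :
  \sum_(i | P i) c i = \sum_i c i * (P i)%:R.
Proof. by rewrite big_mkcond; apply: eq_bigr => i _; case: (P i); rewrite ?mulr1 ?mulr0. Qed.

Definition Q m (c : 'I_m -> C) (w : 'I_m -> seq B) :=
  \sum_i \sum_j c i * (c j)^* * phi (K (w i) (w j)).

Lemma Q_ge0 (HT : completely_positive star T) n m c (w : 'I_m -> seq B) :
  (forall i, size (w i) = n.+1) -> 0 <= Q c w.
Proof.
move=> sw; have := quad_ge0 c (gram_pos HT sw).
by rewrite /Q; under eq_bigr do under eq_bigr do rewrite mxE.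
Qed.


Lemma mulZ1 (a : C) (y z : B) : y * (a *: 1) * z = a *: (y * z).
Proof. by rewrite -scalerAr mulr1 -scalerAl. Qed.

Lemma claim (HT : completely_positive star T) t
  (HS : completely_positive star (shift gamma phi t)) (ht : 0 < 1 - t)
  E (oE : orthE E) n :
  forall m (c : 'I_m -> C) (w : 'I_m -> seq B),
  (forall i, size (w i) = n.+1) -> (forall i, all (mem E) (w i)) ->
  Q c w = 0 -> forall v, \sum_(i | w i == v) c i = 0.
Proof.
have nzE : forall y, y \in E -> ip y y != 0 by case: oE.
elim: n => [|n IH] m c w sw wE Q0 v.
  pose x i := head 0 (w i).
  have wx : forall i, w i = [:: x i].
    by move=> i; move: (sw i); rewrite /x; case: (w i) => [|a [|]].
  have xE : forall i, x i \in E by move=> i; move: (wE i); rewrite wx /= andbT.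
  pose z := \sum_i c i *: x i.
  have z0 : z = 0.
    apply: ip_eq0; rewrite -Q0 /Q /z ip_suml; apply: eq_bigr => i _.
    rewrite ipZl ip_sumr mulr_sumr; apply: eq_bigr => j _.
    by rewrite K1 ?sw // mulrA.
  case: (pickP (fun i => w i == v)) => [i0 /eqP wi0 | none]; last by rewrite big_pred0.
  have : ip z (x i0) = 0 by rewrite z0 ip0l.
  rewrite /z ip_suml.
  under eq_bigr do rewrite ipZl (ip_E oE (xE _) (xE i0)) mulrA.
  rewrite -mulr_suml => /eqP; rewrite mulf_eq0 (negbTE (nzE _ (xE i0))) orbF => /eqP S.
  rewrite sum_pred_nat; apply: etrans S; apply: eq_bigr => i _; congr (_ * _%:R).
  by rewrite -wi0 !wx eqseq_cons andbT.
pose u i := bl (w i); pose x i := lt (w i).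
have wux : forall i, w i = rcons (u i) (x i) by move=> i; apply: bl_lt; rewrite sw.
have su : forall i, size (u i) = n.+1 by move=> i; rewrite /u size_bl sw.
have xE : forall i, x i \in E by move=> i; move: (wE i); rewrite wux all_rcons => /andP[].
have uE : forall i, all (mem E) (u i) by move=> i; move: (wE i); rewrite wux all_rcons => /andP[].
pose G := \matrix_(j, i) K (u i) (u j).
have Gp : mx_positive star G := gram_pos HT su.
pose A := \matrix_(j, i) (star (x j) * (map_mx (shift gamma phi t) G) j i * x i).
have Ap : mx_positive star A := pos_scale x (HS _ _ Gp).
pose cy y i := c i * (x i == y)%:R.
pose X := \sum_(y <- E) ip y y * Q (cy y) u.
have QE : Q c w = \sum_i \sum_j c i * (c j)^* * phi (A j i) + (1 - t) * X.
  rewrite /Q /X.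
  transitivity (\sum_i \sum_j (c i * (c j)^* * phi (A j i) +
       (1 - t) * (c i * (c j)^* * phi (G j i) * ip (x i) (x j)))).
    apply: eq_bigr => i _; apply: eq_bigr => j _.
    rewrite !mxE (wux i) (wux j) K_rcons ?su // (T_split t) mulrDr mulrDl.
    by rewrite mulZ1 phiD phiZ /ip; ring.
  under eq_bigr do rewrite big_split; rewrite big_split /=; congr (_ + _).
  transitivity (\sum_i \sum_j \sum_(y <- E)
      (1 - t) * (ip y y * (cy y i * (cy y j)^* * phi (K (u i) (u j))))).
    apply: eq_bigr => i _; apply: eq_bigr => j _.
    rewrite (ip_E_sum oE (xE i) (xE j)) !mulr_sumr; apply: eq_bigr => y _.
    by rewrite /cy !mxE rmorphM rmorph_nat; ring.
  under [LHS]eq_bigr => i _ do rewrite exchange_big.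
  rewrite exchange_big !mulr_sumr; apply: eq_bigr => y _.
  by rewrite !mulr_sumr; apply: eq_bigr => i _; rewrite !mulr_sumr.
have QA0 : 0 <= \sum_i \sum_j c i * (c j)^* * phi (A j i) := quad_ge0 c Ap.
have Qy0 : forall y, 0 <= Q (cy y) u := fun y => Q_ge0 HT (cy y) su.
have X0 : 0 <= X by apply: sumr_ge0 => y _; apply: mulr_ge0; [exact: ip_ge0 | exact: Qy0].
move: Q0; rewrite QE => /eqP; rewrite paddr_eq0 //; last by apply: mulr_ge0 => //; exact: ltW.
move=> /andP[_].
rewrite mulf_eq0 (gt_eqF ht) /= => X0'.
have Qy : forall y, y \in E -> Q (cy y) u = 0.
  move: X0'; rewrite /X psumr_eq0; last first.
    by move=> y _; apply: mulr_ge0; [exact: ip_ge0 | exact: Qy0].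
  move=> /allP H y yE; move: (H y yE) => /=.
  by rewrite mulf_eq0 (negbTE (nzE y yE)) /= => /eqP.
case: (pickP (fun i => w i == v)) => [i0 /eqP wi0 | none]; last by rewrite big_pred0.
have := IH m (cy (x i0)) u su uE (Qy _ (xE i0)) (u i0).
rewrite sum_pred_nat => S; rewrite sum_pred_nat; apply: etrans S; apply: eq_bigr => i _.
rewrite /cy -wi0 (wux i) (wux i0) eqseq_rcons -mulrA; congr (_ * _).
by case: (u i == u i0); case: (x i == x i0); rewrite /= ?mul1r ?mul0r.
Qed.


Lemma sum_nth_cond (V : nmodType) (z : fock B) (P : pred (C * seq B))
   (F : C * seq B -> V) :
  \sum_(p <- z | P p) F p =
  \sum_(i < size z | P (nth (0, [::]) z i)) F (nth (0, [::]) z i).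
Proof. by rewrite (big_nth (0, [::])) big_mkord. Qed.

Lemma sum_nth (V : nmodType) (z : fock B) (F : C * seq B -> V) :
  \sum_(p <- z) F p = \sum_(i < size z) F (nth (0, [::]) z i).
Proof. by rewrite (big_nth (0, [::])) big_mkord. Qed.

Lemma lev_pos (HT : completely_positive star T) t
  (HS : completely_positive star (shift gamma phi t)) (ht : 0 < 1 - t)
  E (oE : orthE E) n (z : fock B) :
  (forall p, p \in z -> size p.2 = n) -> (forall p, p \in z -> all (mem E) p.2) ->
  0 <= FF z z /\ (FF z z = 0 -> forall v, fcoef z v = 0).
Proof.
move=> sz zE; case: n sz => [|n] sz.
  pose s := \sum_(p <- z) p.1.
  have e : FF z z = s * s^*.
    rewrite /fock_form /s mulr_suml; apply: eq_big_seq => p pin /=.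
    rewrite rmorph_sum mulr_sumr; apply: eq_big_seq => q qin /=.
    by rewrite (size0nil (sz p pin)) (size0nil (sz q qin)) /word_form /= mulr1.
  rewrite e mul_conjC_ge0; split => // /eqP; rewrite mul_conjC_eq0 => /eqP s0 v.
  rewrite /fcoef big_mkcond /=.
  rewrite (eq_big_seq (fun p => p.1 * ([::] == v)%:R)); last first.
    by move=> p pin /=; rewrite (size0nil (sz p pin)); case: ([::] == v); rewrite ?mulr1 ?mulr0.
  by rewrite -mulr_suml -/s s0 mul0r.
pose c (i : 'I_(size z)) := (nth (0, [::]) z i).1.
pose w (i : 'I_(size z)) := (nth (0, [::]) z i).2.
have sw : forall i : 'I_(size z), size (w i) = n.+1 by move=> i; apply: sz; exact: mem_nth.
have wE : forall i : 'I_(size z), all (mem E) (w i) by move=> i; apply: zE; exact: mem_nth.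
have e : FF z z = Q c w.
  rewrite /fock_form sum_nth /Q; apply: eq_bigr => i _.
  by rewrite sum_nth; apply: eq_bigr => j _; rewrite wfK ?sw.
rewrite e; split; first by apply: (Q_ge0 HT c sw).
move=> Q0 v; rewrite /fcoef sum_nth_cond.
exact: (claim HT HS ht oE sw wE Q0 v).
Qed.


Lemma all_zero (HT : completely_positive star T) t
  (HS : completely_positive star (shift gamma phi t)) (ht : 0 < 1 - t)
  E (oE : orthE E) (z : fock B) :
  (forall p, p \in z -> all (mem E) p.2) -> FF z z = 0 -> forall v, fcoef z v = 0.
Proof.
move=> zE F0.
pose N := (\max_(p <- z) size p.2).+1.
have ltN : forall p, p \in z -> (size p.2 < N)%N.
  by move=> p pin; rewrite ltnS; exact: (@leq_bigmax_seq _ z xpredT (fun p => size p.2) p pin isT).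
pose lev n := [seq p <- z | size p.2 == n].
have levE : forall n, FF (lev n) (lev n) = \sum_(p <- z | size p.2 == n)
     \sum_(q <- z | size q.2 == n) p.1 * q.1^* * WF p.2 q.2.
  by move=> n; rewrite /fock_form big_filter; apply: eq_bigr => p _; rewrite big_filter.
have dec : FF z z = \sum_(n < N) FF (lev n) (lev n).
  under eq_bigr do rewrite levE big_mkcond.
  rewrite exchange_big /= /fock_form; apply: eq_big_seq => p pin.
  rewrite -big_mkcond /= (big_pred1 (Ordinal (ltN p pin))) /=; last first.
    by move=> n; rewrite /= -val_eqE /= eq_sym.
  rewrite [RHS]big_mkcond; apply: eq_bigr => q _; case: eqP => // ne.
  by rewrite wf_size ?mulr0 // eq_sym; apply/eqP.
have levpos : forall n, 0 <= FF (lev n) (lev n) /\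
    (FF (lev n) (lev n) = 0 -> forall v, fcoef (lev n) v = 0).
  move=> n; apply: (lev_pos HT HS ht oE (n := n)).
    by move=> p; rewrite mem_filter => /andP[/eqP].
  by move=> p; rewrite mem_filter => /andP[_ /zE].
have lev0 : forall n : 'I_N, FF (lev n) (lev n) = 0.
  move=> n; apply: (@psumr_eq0P _ _ xpredT (fun n : 'I_N => FF (lev n) (lev n))) => //.
    by move=> i _; exact: (levpos i).1.
  by rewrite -dec.
move=> v; case: (ltnP (size v) N) => [vN | vN].
  move: ((levpos _).2 (lev0 (Ordinal vN)) v); rewrite /fcoef big_filter_cond => h; apply: (etrans _ h).
  by apply: eq_bigl => p; case: eqP => [->|]; rewrite ?eqxx // andbF.
rewrite /fcoef big_seq_cond big1 // => p /andP[pin /eqP e]; exfalso.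
by have := ltN p pin; rewrite e ltnNge vN.
Qed.

End Main.


Unset Implicit Arguments.
Set Strict Implicit.
Local Open Scope complex_scope.

Theorem lemma2p4 (R : realType) (B : algType R[i]) (star : B -> B)
    (phi : B -> R[i]) (gamma : B -> B) :
  star_involution star ->
  star_linear_functional star phi ->
  positive_functional star phi ->
  faithful_functional star phi ->
  star_linear_map star gamma ->
  completely_positive star (shift gamma phi 1) ->
  (exists2 t : R[i], t < 1 & completely_positive star (shift gamma phi t)) ->
  forall xi : fock B, fock_form star gamma phi xi xi = 0 -> fock_zero xi.
Proof.
move=> Hs Hphi Hpos Hfa Hg HT [t ht HS] xi H0.
have ht' : 0 < 1 - t by rewrite subr_gt0.
have [E [oE spE]] := gram Hs Hphi Hfa (flatten [seq p.2 | p <- xi]).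
have sp : forall p, p \in xi -> forall x, x \in p.2 -> spanned star phi E x.
  by move=> p pin x xp; apply: spE; apply/flatten_mapP; exists p.
apply: (fock_zero_of sp).
apply: (all_zero Hs Hphi Hpos Hfa HT HS ht' oE).
  move=> q /flatten_mapP [p pin /mapP [r rin ->]] /=.
  exact: (expw_prop rin).2.
by rewrite (FF_xexp Hs Hphi Hg sp).
Qed.
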